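(* Let $G=(U,E)$ be a tree and $\mathcal S\subset 2^U$ a category system such that $(G,\mathcal S)$ is internally connected and shattered. Then the greedy category-based routing strategy ROUTING routes messages correctly between every pair of vertices.
   Context: $N(s)$ denotes the set of neighbors of $s$ in $G$. $(G,\mathcal S)$ is internally connected if for every $C\in\mathcal S$ the subgraph of $G$ induced by $C$ is connected. $(G,\mathcal S)$ is shattered if for all $s,t\in U$ with $s\neq t$ there exist $u\in N(s)$ and $C\in\mathcal S$ with $u\in C$, $t\in C$ and $s\notin C$ (possibly $u=t$). For $u\in U$ let $\mathrm{cat}(u)=\{C\in\mathcal S: u\in C\}$, and $d(s,t)=|\mathrm{cat}(t)\setminus\mathrm{cat}(s)|$. ROUTING: a node $u$ holding a message for destination $w\neq u$ forwards it to a neighbor $v\in N(u)$ with $d(v,w)<d(u,w)$. ROUTING routes correctly between all pairs if for every ordered pair of distinct vertices $u,w$ there is a neighbor $v\in N(u)$ with $d(v,w)<d(u,w)$. *)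

(* Defs.v *)
From mathcomp Require Import all_boot.
Set Implicit Arguments. Unset Strict Implicit. Unset Printing Implicit Defensive.

Definition simple_graph (T : finType) (e : rel T) : Prop :=
  symmetric e /\ irreflexive e.

Definition connected_graph (T : finType) (e : rel T) : Prop :=
  forall x y : T, connect e x y.

Definition acyclic_graph (T : finType) (e : rel T) : Prop :=
  forall c : seq T, 3 <= size c -> uniq c -> ~~ cycle e c.

Definition is_tree (T : finType) (e : rel T) : Prop :=
  [/\ simple_graph e, connected_graph e & acyclic_graph e].

Definition induced (T : finType) (e : rel T) (C : {set T}) : rel T :=
  [rel a b | [&& e a b, a \in C & b \in C]].

Definition internally_connected (T : finType) (e : rel T) (S : {set {set T}}) : Prop :=
  forall C, C \in S -> forall x y, x \in C -> y \in C -> connect (induced e C) x y.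

Definition shattered (T : finType) (e : rel T) (S : {set {set T}}) : Prop :=
  forall s t : T, s != t ->
    exists u : T, exists C : {set T},
      [/\ e s u, C \in S, u \in C, t \in C & s \notin C].

Definition cat (T : finType) (S : {set {set T}}) (u : T) : {set {set T}} :=
  [set C in S | u \in C].

Definition dist_cat (T : finType) (S : {set {set T}}) (s t : T) : nat :=
  #|cat S t :\: cat S s|.

Definition routes_correctly (T : finType) (e : rel T) (S : {set {set T}}) : Prop :=
  forall u w : T, u != w ->
    exists v : T, e u v && (dist_cat S v w < dist_cat S u w).

(* Main.v *)
Require Import Defs.
From mathcomp Require Import all_boot.
Set Implicit Arguments. Unset Strict Implicit.

Definition avoid (T : finType) (e : rel T) (u : T) : rel T :=
  [rel a b | [&& e a b, a != u & b != u]].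

Lemma path_avoid_all (T : finType) (e : rel T) u x p :
  path (@avoid T e u) x p -> all (predC1 u) p.
Proof.
elim: p x => [|y p IH] x //= /andP [/and3P [_ _ hy] hp].
by rewrite /= hy (IH y hp).
Qed.

Lemma first_step (T : finType) (e : rel T) u w :
  u != w -> connect e u w -> exists2 x, e u x & connect (@avoid T e u) x w.
Proof.
move=> uw /connectP [p hp hw]; subst w; move: uw.
case: (shortenP hp) => p' hp' hu _.
case: p' hp' hu => [|x p''] /=; first by move=> _ _; rewrite eqxx.
move=> /andP [eux hp''] /andP [hnu hun] _.
exists x => //.
apply/connectP; exists p'' => //.
apply: (@sub_in_path _ (predC1 u) e) => //.
  by move=> a b ha hb hab; rewrite /avoid /= hab; move: ha hb; rewrite !inE /= => -> ->.
apply/allP => z hz; rewrite inE /=; apply/eqP => zu.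
by move: hnu; rewrite -zu hz.
Qed.

Lemma key (T : finType) (e : rel T) u x y w :
  is_tree e -> e u x -> e u y ->
  connect (@avoid T e u) x w -> connect (@avoid T e u) y w -> x = y.
Proof.
case=> [[sym irr] _ acyc] eux euy cx cy.
apply/eqP; apply/negPn/negP => nxy.
have symr : symmetric (@avoid T e u).
  by move=> a b; rewrite /avoid /= sym; case: (e b a); case: (a != u); case: (b != u).
have cxy : connect (@avoid T e u) x y.
  by apply: connect_trans cx _; rewrite (sym_connect_sym symr).
move: cxy => /connectP [p hp hl]; subst y; move: nxy euy.
case: (shortenP hp) => p' hp' hu _ nxy euy.
suff [h1 h2 h3] : [/\ 3 <= size (u :: x :: p'), uniq (u :: x :: p') & cycle e (u :: x :: p')].
  by move: (acyc _ h1 h2); rewrite h3.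
split.
- by case: p' hp' hu nxy euy => [|a q] //=; rewrite eqxx.
- move: hu => /= /andP [hxp hup]; rewrite /= hxp hup !andbT.
  have hx : x != u by apply/eqP => xu; rewrite xu irr in eux.
  have := @path_avoid_all _ _ _ _ _ hp'; rewrite inE negb_or eq_sym hx /= => ha.
  apply/negP => hin; move/allP: ha => /(_ u hin); rewrite /= eqxx.
  done.
- rewrite /cycle /= rcons_path eux /=.
  rewrite (sub_path _ hp') /=; last by move=> a b /and3P [].
  by rewrite sym.
Qed.

Theorem lemma2 (T : finType) (e : rel T) (S : {set {set T}}) :
  is_tree e -> internally_connected e S -> shattered e S ->
  routes_correctly e S.
Proof.
move=> tree ic sh u w uw.
have [sym irr] : simple_graph e by case: tree.
have [v [C [euv CS vC wC uC]]] := sh u w uw.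
exists v; rewrite euv /=.
have cv : connect (@avoid T e u) v w.
  apply: (connect_sub _ (ic C CS v w vC wC)) => a b /and3P [hab ha hb].
  apply: connect1; rewrite /avoid /= hab /=.
  by apply/andP; split; apply/eqP => h; move: uC; rewrite -h ?ha ?hb.
apply: proper_card; apply/properP; split.
  apply/subsetP => D; rewrite !inE => /andP [hnv /andP [DS wD]].
  rewrite DS wD /= !andbT.
  apply/negP => uD; move: hnv; rewrite DS /=; apply/negP/negPn.
  have [x /and3P [eux _ xD] cx] := first_step uw (ic D DS u w uD wD).
  have cx' : connect (@avoid T e u) x w.
    apply: (connect_sub _ cx) => a b /and3P [/and3P [hab _ _] ha hb].
    by apply: connect1; rewrite /avoid /= hab ha hb.
  by rewrite (key tree euv eux cv cx').
exists C; rewrite !inE CS wC /= ?andbT ?vC /=; [exact: uC | done].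
Qed.
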